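(* Let $n_1,n_3,n_5>0$ and $\theta_1,\theta_3,\theta_5\in[0,\pi/2)$ satisfy $n_1\sin\theta_1=n_3\sin\theta_3=n_5\sin\theta_5$, and put $c_i=\cos\theta_i/n_i$ for $i=1,3,5$. Let $a_0>0$, $r_2>0$, $r_4>0$, $\tau>0$ and \[ a_1=2\pi c_3\frac{2c_1}{c_1+c_3},\qquad a_2=2\pi c_3\frac{c_1-c_3}{c_1+c_3},\qquad a_5=\frac{2c_5}{c_5+c_3}. \] Define the real $3\times 3$ matrices \[ A=\begin{pmatrix}-a_1r_2&0&a_1a_0\\0&-(a_1-a_2)r_4a_5&0\\0&0&-1\end{pmatrix},\quad B=\begin{pmatrix}0&0&0\\-a_5a_1r_2&0&a_2a_0a_5\\0&-\frac{a_5r_4}{a_0}&0\end{pmatrix}, \] \[ C=\begin{pmatrix}0&0&0\\0&0&0\\-\frac{a_1r_2(a_5-1)}{(a_1-a_2)a_0}&0&\frac{a_2(a_5-1)}{a_1-a_2}\end{pmatrix}, \] and for $\epsilon\ge 0$ let $E(\epsilon)=\mathrm{diag}(1,1,\epsilon)$ and \[ \Delta(\epsilon,s)=sE(\epsilon)-A-Be^{-\tau s}-Ce^{-2\tau s},\qquad s\in\mathbb{C}. \] Let $\sigma(\epsilon)=\{\lambda\in\mathbb{C}:\det\Delta(\epsilon,\lambda)=0\}$. Then for every $\epsilon\ge 0$: (a) $0\in\sigma(\epsilon)$ and $\lambda=0$ is a simple root of $\det\Delta(\epsilon,\lambda)=0$; (b) every $\lambda\in\sigma(\epsilon)\setminus\{0\}$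 satisfies $\Re(\lambda)<0$.
   Context: Here $\Delta(\epsilon,s)$ is the characteristic matrix of the (for $\epsilon>0$ singularly perturbed) linear delay system $\frac{d}{dt}(E(\epsilon)x(t))=Ax(t)+Bx(t-\tau)+Cx(t-2\tau)+h(t)$ in $\mathbb{R}^3$. Note $a_1-a_2=2\pi c_3>0$. *)

(* Defs.v *)
From HB Require Import structures.
From mathcomp Require Import all_boot all_order all_algebra.
From mathcomp Require Import all_classical all_reals all_analysis.
From mathcomp Require Import complex.
Set Implicit Arguments. Unset Strict Implicit. Unset Printing Implicit Defensive.
Import Order.TTheory GRing.Theory Num.Theory.
Import numFieldNormedType.Exports.
Import ComplexField.
Local Open Scope ring_scope.
Local Open Scope complex_scope.

Definition cexp {R : realType} (z : R[i]) : R[i] :=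
  (expR (complex.Re z))%:C * (cos (complex.Im z) +i* sin (complex.Im z)).

Definition mx3 {T : nmodType} (x00 x01 x02 x10 x11 x12 x20 x21 x22 : T)
  : 'M[T]_3 :=
  \matrix_(i < 3, j < 3)
    nth 0 (nth [::] [:: [:: x00; x01; x02]; [:: x10; x11; x12];
                        [:: x20; x21; x22]] i) j.

Definition cc {R : realType} (n theta : R) : R := cos theta / n.

Definition a1 {R : realType} (c1 c3 : R) : R :=
  2 * pi * c3 * ((2 * c1) / (c1 + c3)).
Definition a2 {R : realType} (c1 c3 : R) : R :=
  2 * pi * c3 * ((c1 - c3) / (c1 + c3)).
Definition a5 {R : realType} (c3 c5 : R) : R := (2 * c5) / (c5 + c3).

Definition matA {R : realType} (a0 a1 a2 a5 r2 r4 : R) : 'M[R]_3 :=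
  mx3 (- (a1 * r2)) 0 (a1 * a0)
      0 (- ((a1 - a2) * r4 * a5)) 0
      0 0 (-1).
Definition matB {R : realType} (a0 a1 a2 a5 r2 r4 : R) : 'M[R]_3 :=
  mx3 0 0 0
      (- (a5 * a1 * r2)) 0 (a2 * a0 * a5)
      0 (- (a5 * r4 / a0)) 0.
Definition matC {R : realType} (a0 a1 a2 a5 r2 r4 : R) : 'M[R]_3 :=
  mx3 0 0 0
      0 0 0
      (- (a1 * r2 * (a5 - 1) / ((a1 - a2) * a0))) 0 (a2 * (a5 - 1) / (a1 - a2)).

Definition matE {R : realType} (eps : R) : 'M[R]_3 :=
  mx3 1 0 0  0 1 0  0 0 eps.

Definition cmx {R : realType} (M : 'M[R]_3) : 'M[R[i]]_3 := map_mx (fun x => x%:C) M.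

Definition Delta {R : realType} (a0 a1 a2 a5 r2 r4 tau eps : R) (s : R[i])
  : 'M[R[i]]_3 :=
  s *: cmx (matE eps) - cmx (matA a0 a1 a2 a5 r2 r4)
  - cexp (- (tau%:C * s)) *: cmx (matB a0 a1 a2 a5 r2 r4)
  - cexp (- ((2 * tau)%:C * s)) *: cmx (matC a0 a1 a2 a5 r2 r4).

Definition chardet {R : realType} (a0 a1 a2 a5 r2 r4 tau eps : R) (s : R[i])
  : R[i] := \det (Delta a0 a1 a2 a5 r2 r4 tau eps s).

(* Main.v *)
Require Import Defs.
From HB Require Import structures.
From mathcomp Require Import all_boot all_order all_algebra.
From mathcomp Require Import all_classical all_reals all_analysis.
From mathcomp Require Import complex.
From mathcomp Require Import ring lra.
Set Implicit Arguments. Unset Strict Implicit. Unset Printing Implicit Defensive.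
Import Order.TTheory GRing.Theory Num.Theory.
Import numFieldNormedType.Exports.
Import ComplexField.
Local Open Scope ring_scope.
Local Open Scope complex_scope.
Definition i0 : 'I_3 := @Ordinal 3 0 isT.
Definition i1 : 'I_3 := @Ordinal 3 1 isT.
Definition i2 : 'I_3 := @Ordinal 3 2 isT.
Lemma det3 (T : comRingType) (M : 'M[T]_3) :
  \det M =
  M i0 i0 * (M i1 i1 * M i2 i2 - M i1 i2 * M i2 i1)
  - M i0 i1 * (M i1 i0 * M i2 i2 - M i1 i2 * M i2 i0)
  + M i0 i2 * (M i1 i0 * M i2 i1 - M i1 i1 * M i2 i0).
Proof.
rewrite (expand_det_row _ ord0) !big_ord_recl big_ord0 /cofactor.
rewrite !(expand_det_row _ ord0) !big_ord_recl !big_ord0 /cofactor !det_mx11 !mxE /= /bump /=.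
set f := fun i j : nat => M (inord i) (inord j).
have HM : forall i j : 'I_3, M i j = f i j by move=> i j; rewrite /f !inord_val.
rewrite !HM /=.
ring.
Qed.

Section S.
Variable R : realType.
Lemma entD (s e1 e2 : R[i]) (A B C D : 'M[R[i]]_3) i j :
  (s *: A - B - e1 *: C - e2 *: D) i j = s * A i j - B i j - e1 * C i j - e2 * D i j.
Proof. by rewrite !mxE. Qed.
Lemma cmxE (M : 'M[R]_3) i j : cmx M i j = (M i j)%:C.
Proof. by rewrite mxE. Qed.
Lemma mx3E00 (x00 x01 x02 x10 x11 x12 x20 x21 x22 : R) :
  mx3 x00 x01 x02 x10 x11 x12 x20 x21 x22 i0 i0 = x00.
Proof. by rewrite mxE. Qed.
Lemma mx3E01 (x00 x01 x02 x10 x11 x12 x20 x21 x22 : R) :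
  mx3 x00 x01 x02 x10 x11 x12 x20 x21 x22 i0 i1 = x01.
Proof. by rewrite mxE. Qed.
Lemma mx3E02 (x00 x01 x02 x10 x11 x12 x20 x21 x22 : R) :
  mx3 x00 x01 x02 x10 x11 x12 x20 x21 x22 i0 i2 = x02.
Proof. by rewrite mxE. Qed.
Lemma mx3E10 (x00 x01 x02 x10 x11 x12 x20 x21 x22 : R) :
  mx3 x00 x01 x02 x10 x11 x12 x20 x21 x22 i1 i0 = x10.
Proof. by rewrite mxE. Qed.
Lemma mx3E11 (x00 x01 x02 x10 x11 x12 x20 x21 x22 : R) :
  mx3 x00 x01 x02 x10 x11 x12 x20 x21 x22 i1 i1 = x11.
Proof. by rewrite mxE. Qed.
Lemma mx3E12 (x00 x01 x02 x10 x11 x12 x20 x21 x22 : R) :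
  mx3 x00 x01 x02 x10 x11 x12 x20 x21 x22 i1 i2 = x12.
Proof. by rewrite mxE. Qed.
Lemma mx3E20 (x00 x01 x02 x10 x11 x12 x20 x21 x22 : R) :
  mx3 x00 x01 x02 x10 x11 x12 x20 x21 x22 i2 i0 = x20.
Proof. by rewrite mxE. Qed.
Lemma mx3E21 (x00 x01 x02 x10 x11 x12 x20 x21 x22 : R) :
  mx3 x00 x01 x02 x10 x11 x12 x20 x21 x22 i2 i1 = x21.
Proof. by rewrite mxE. Qed.
Lemma mx3E22 (x00 x01 x02 x10 x11 x12 x20 x21 x22 : R) :
  mx3 x00 x01 x02 x10 x11 x12 x20 x21 x22 i2 i2 = x22.
Proof. by rewrite mxE. Qed.
Lemma det_gen (a0 a1 a2 a5 r2 r4 eps : R) (s e1 e2 : R[i]) :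
  a0 != 0 -> a1 - a2 != 0 -> e2 = e1 ^+ 2 ->
  \det (s *: cmx (matE eps) - cmx (matA a0 a1 a2 a5 r2 r4)
  - e1 *: cmx (matB a0 a1 a2 a5 r2 r4)
  - e2 *: cmx (matC a0 a1 a2 a5 r2 r4)) =
  (s + (a1 * r2)%:C) * (s + ((a1 - a2) * r4 * a5)%:C) * (eps%:C * s + 1)
  - ((a1 * r2)%:C - (a2 / (a1 - a2))%:C * s) * (((a1 - a2) * r4 * a5)%:C - (a5 - 1)%:C * s) * e2.
Proof.
move=> a0n0 kn0 ->.
rewrite det3 !entD !cmxE.
rewrite /matE /matA /matB /matC.
rewrite !mx3E00 !mx3E01 !mx3E02 !mx3E10 !mx3E11 !mx3E12 !mx3E20 !mx3E21 !mx3E22.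
rewrite !(rmorph0, rmorph1, rmorphN, rmorphM, rmorphB, fmorphV).
have h0 : a0%:C != 0 :> R[i] by rewrite eq_complex /= negb_and a0n0.
have h1 : a1%:C - a2%:C != 0 :> R[i] by rewrite -rmorphB eq_complex /= negb_and kn0.
field.
by apply/andP; split; [exact: h1 | exact: h0].
Qed.
End S.

Section S2.
Variable R : realType.
Local Open Scope classical_set_scope.
Local Open Scope ring_scope.

Lemma mvt0 (f df : R -> R) (x M : R) : (forall y : R, is_derive y (1:R) f (df y)) ->
  (forall y, `|y| <= `|x| -> `|df y| <= M) -> `|f x - f 0| <= M * `|x|.
Proof.
move=> hd hM.
have cf : forall a b, {within `[a, b], continuous f}.
  move=> a b; apply: derivable_within_continuous => y _; exact: ex_derive.
case: (lerP 0 x) => hx.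
- have [c] := MVT_segment hx (fun y _ => hd y) (cf 0 x).
  rewrite in_itv /= => /andP[c0 cx] ->.
  rewrite subr0 normrM; apply: ler_wpM2r => //; apply: hM.
  by rewrite !ger0_norm // (le_trans c0).
- have [c] := MVT_segment (ltW hx) (fun y _ => hd y) (cf x 0).
  rewrite in_itv /= => /andP[xc c0] E.
  rewrite distrC E sub0r normrM normrN; apply: ler_wpM2r => //; apply: hM.
  rewrite !ler0_norm ?(ltW hx) //; by rewrite lerN2.
Qed.

Lemma sin_absle (x : R) : `|sin x| <= `|x|.
Proof.
have := @mvt0 (@sin R) (@cos R) x 1 (fun y => is_derive_sin y) (fun y _ => cos_max y).
by rewrite sin0 subr0 mul1r.
Qed.

Lemma cos_absle (x : R) : `|cos x - 1| <= x ^+ 2.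
Proof.
have := @mvt0 (@cos R) (fun y => - sin y) x `|x| (fun y => is_derive_cos y).
rewrite cos0 -normrM -expr2 ger0_norm ?sqr_ge0 //; apply => y hy.
by rewrite normrN (le_trans (sin_absle y)).
Qed.

Lemma sin_id_absle (x : R) : `|sin x - x| <= x ^+ 2 * `|x|.
Proof.
have hd : forall y : R, is_derive y (1:R) ((@sin R) - id) (cos y - 1).
  move=> y; apply: is_deriveB.
have := @mvt0 ((@sin R) - id) (fun y => cos y - 1) x (x ^+ 2) hd.
move=> H.
have E : forall z : R, ((@sin R) - id) z = sin z - z by [].
rewrite (E x) (E 0) sin0 !subr0 in H; apply: H => y hy.
apply: (le_trans (cos_absle y)).
have h1 := real_normK (num_real y); have h2 := real_normK (num_real x).
have h3 := normr_ge0 y; nra.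
Qed.

Lemma expR_le2 (y : R) : `|y| <= 1/2 -> expR y <= 2.
Proof.
move=> hy.
have h1 := expR_ge1Dx (- y).
have h2 := expRxMexpNx_1 y.
have h3 := expR_gt0 y.
move: hy; rewrite ler_norml => /andP[hy1 hy2].
have h4 : 0 <= expR (- y) - 1/2 by lra.
have := mulr_ge0 (ltW h3) h4.
rewrite mulrBr h2; lra.
Qed.

Lemma expR_absle (y : R) : `|y| <= 1/2 -> `|expR y - 1| <= 2 * `|y|.
Proof.
move=> hy.
have := @mvt0 (@expR R) (@expR R) y 2 (fun z => is_derive_expR z).
rewrite expR0; apply => z hz.
rewrite ger0_norm ?expR_ge0 //; apply: expR_le2; exact: le_trans hz hy.
Qed.


Lemma sq_le (x k : R) : `|x| <= k -> x ^+ 2 <= k ^+ 2.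
Proof.
move=> h; have h0 := normr_ge0 x; rewrite -real_normK ?num_real //.
rewrite !expr2; apply: ler_pM => //.
Qed.

Lemma expR_id_absle (y : R) : `|y| <= 1/2 -> `|expR y - 1 - y| <= 2 * y ^+ 2.
Proof.
move=> hy.
have hd : forall z : R, is_derive z (1:R) ((@expR R) - id) (expR z - 1).
  move=> z; apply: is_deriveB.
have := @mvt0 ((@expR R) - id) (fun z => expR z - 1) y (2 * `|y|) hd.
move=> H.
have E : forall z : R, ((@expR R) - id) z = expR z - z by [].
rewrite (E y) (E 0) expR0 subr0 -mulrA -expr2 real_normK ?num_real // in H.
rewrite -addrA (addrC (-1)) addrA; apply: H => z hz.
apply: (le_trans (expR_absle (le_trans hz hy))).
by rewrite ler_pM2l.
Qed.

Lemma cexpD (x y : R[i]) : cexp (x + y) = cexp x * cexp y.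
Proof.
case: x => a b; case: y => c d.
rewrite /cexp /= expRD cosD sinD.
apply/eqP; rewrite eq_complex /=; apply/andP; split; apply/eqP; ring.
Qed.

Lemma cexp0 : cexp (0 : R[i]) = 1.
Proof.
rewrite /cexp /= expR0 cos0 sin0.
apply/eqP; rewrite eq_complex /=; apply/andP; split; apply/eqP; ring.
Qed.

Lemma cexp_bound (a b : R) : a ^+ 2 + b ^+ 2 <= 1/4 ->
  complex.Re (cexp (a +i* b) - 1 - (a +i* b)) ^+ 2 + complex.Im (cexp (a +i* b) - 1 - (a +i* b)) ^+ 2
   <= 9 * (a ^+ 2 + b ^+ 2) ^+ 2.
Proof.
set r := cexp (a +i* b) - 1 - (a +i* b).
move=> hab.
have ha : `|a| <= 1/2.
  rewrite ler_norml; apply/andP; split; nra.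
have hb : `|b| <= 1/2.
  rewrite ler_norml; apply/andP; split; nra.
have hRe : complex.Re r = (expR a - 1 - a) + expR a * (cos b - 1).
  rewrite /r /cexp /=; ring.
have hIm : complex.Im r = (expR a - 1) * sin b + (sin b - b).
  rewrite /r /cexp /=; ring.
set rho := a ^+ 2 + b ^+ 2.
have h1 : `|complex.Re r| <= 2 * rho.
  rewrite hRe; apply: (le_trans (ler_normD _ _)).
  have e1 := expR_id_absle ha.
  have e2 : `|expR a * (cos b - 1)| <= 2 * b ^+ 2.
    rewrite normrM; apply: ler_pM => //.
    - by rewrite ger0_norm ?expR_ge0 //; exact: expR_le2 ha.
    - exact: cos_absle.
  rewrite /rho; lra.
have h2 : `|complex.Im r| <= 2 * rho.
  rewrite hIm; apply: (le_trans (ler_normD _ _)).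
  have e3 : `|(expR a - 1) * sin b| <= 2 * `|a| * `|b|.
    rewrite normrM; apply: ler_pM => //; [exact: expR_absle ha | exact: sin_absle].
  have e4 := sin_id_absle b.
  have k1 := real_normK (num_real a); have k2 := real_normK (num_real b).
  have k3 := normr_ge0 a; have k4 := normr_ge0 b.
  have k5 : 2 * `|a| * `|b| <= a ^+ 2 + b ^+ 2.
    rewrite -k1 -k2; have := sqr_ge0 (`|a| - `|b|); lra.
  have k6 : b ^+ 2 * `|b| <= b ^+ 2 / 2.
    have := sqr_ge0 b; nra.
  have := sqr_ge0 a; have := sqr_ge0 b.
  rewrite /rho; lra.
have s1 := sq_le h1; have s2 := sq_le h2.
have : (2 * rho) ^+ 2 = 4 * rho ^+ 2 by ring.
have := sqr_ge0 rho.
lra.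
Qed.


Definition nr (z : R[i]) : R := Num.sqrt (complex.Re z ^+ 2 + complex.Im z ^+ 2).

Lemma normE (z : R[i]) : `|z| = (nr z)%:C.
Proof. exact: normc_def. Qed.

Lemma nr_ge0 z : 0 <= nr z. Proof. exact: sqrtr_ge0. Qed.

Lemma nr_sq z : nr z ^+ 2 = complex.Re z ^+ 2 + complex.Im z ^+ 2.
Proof. by rewrite sqr_sqrtr // addr_ge0 // sqr_ge0. Qed.

Lemma cexp_boundR (w : R[i]) : nr w <= 1/2 -> nr (cexp w - 1 - w) <= 3 * nr w ^+ 2.
Proof.
case: w => a b hw.
have hs := nr_sq (a +i* b); rewrite /= in hs.
have h0 := nr_ge0 (a +i* b).
have hab : a ^+ 2 + b ^+ 2 <= 1/4 by rewrite -hs; nra.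
have hb := cexp_bound hab.
have t0 := nr_ge0 (cexp (a +i* b) - 1 - (a +i* b)).
have ts := nr_sq (cexp (a +i* b) - 1 - (a +i* b)).
rewrite hs; set t := nr _ in t0 ts *; set X := _ + _ in ts hb.
have := sqr_ge0 (a ^+ 2 + b ^+ 2); have := sqr_ge0 a; have := sqr_ge0 b.
nra.
Qed.


Lemma is_derive_cexp (c : R) : 0 < c ->
  is_derive (0 : R[i]^o) (1 : R[i]^o) (fun s : R[i]^o => (cexp (- (c%:C * s)) : R[i]^o)) (- c%:C).
Proof.
move=> c0.
pose G := (fun s : R[i]^o => (cexp (- (c%:C * s)) : R[i]^o)).
have L : (fun h : R[i]^o => h^-1 *: ((G \o shift 0) (h *: (1 : R[i]^o)) - G 0)) @ (0 : R[i]^o)^' --> (- c%:C : R[i]^o).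
  2: apply: DeriveDef; [exact: cvgP L | exact: cvg_lim L].
apply/cvgrPdist_le => -[e' ei]; rewrite ltcE /= => /andP[/eqP ei0 ep].
rewrite ei0 complexr0.
have c2 : 0 < c ^+ 2 by rewrite exprn_gt0.
pose d := Num.min (1 / (2 * c)) (e' / (3 * c ^+ 2)).
have d0 : 0 < d by rewrite lt_min !divr_gt0 ?mulr_gt0 //.
have d1 : d <= 1 / (2 * c) by rewrite ge_min lexx.
have d2 : d <= e' / (3 * c ^+ 2) by rewrite ge_min lexx orbT.
near=> h.
have hh0 : h != 0 by near: h; exact: nbhs_dnbhs_neq.
have hhd : `|h| <= d%:C by near: h; apply: dnbhs0_le; rewrite ltcR.
have hA : h%:A = h :> R[i]^o by rewrite -[RHS]mulr1.
have sE : forall u v : R[i]^o, u *: v = u * v by [].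
rewrite /= hA sE /G addr0 mulr0 oppr0 cexp0.
set w := - (c%:C * h).
have Ew : - c%:C - h^-1 * (cexp w - 1) = - (h^-1 * (cexp w - 1 - w)) by rewrite /w; field.
rewrite Ew normrN normrM normfV !normE -fmorphV -rmorphM lecR.
have nh0 : 0 < nr h.
  rewrite lt_def nr_ge0 andbT; move: hh0; rewrite -normr_eq0 normE.
  by rewrite eq_complex /= eqxx andbT.
move: hhd; rewrite normE lecR => hhd.
have nw : nr w = c * nr h.
  apply: complexI; rewrite -!normE /w normrN normrM gtr0_norm ?ltcR //.
  by rewrite normE -rmorphM.
have nw2 : nr w <= 1/2.
  rewrite nw; move: d1; rewrite ler_pdivlMr ?mulr_gt0 // => d1'.
  nra.
have hb := cexp_boundR nw2.
rewrite nw in hb.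
rewrite mulrC ler_pdivrMr //.
move: d2; rewrite ler_pdivlMr ?mulr_gt0 // => d2'.
nra.
Unshelve. all: by end_near.
Qed.

End S2.


Lemma nrM (R : realType) (x y : R[i]) : nr (x * y) = nr x * nr y.
Proof. have := normrM x y; rewrite !normE -rmorphM; by case. Qed.

Lemma nr_lt (R : realType) (u v : R[i]) :
  complex.Re u ^+ 2 + complex.Im u ^+ 2 < complex.Re v ^+ 2 + complex.Im v ^+ 2 -> nr u < nr v.
Proof.
move=> h; have := nr_sq u; have := nr_sq v; have := nr_ge0 u; have := nr_ge0 v.
nra.
Qed.

Unset Implicit Arguments.
Theorem lemma1 (R : realType) (n1 n3 n5 th1 th3 th5 a0 r2 r4 tau : R) :
  0 < n1 -> 0 < n3 -> 0 < n5 ->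
  0 <= th1 < pi / 2 -> 0 <= th3 < pi / 2 -> 0 <= th5 < pi / 2 ->
  n1 * sin th1 = n3 * sin th3 -> n3 * sin th3 = n5 * sin th5 ->
  0 < a0 -> 0 < r2 -> 0 < r4 -> 0 < tau ->
  let c1 := cc n1 th1 in let c3 := cc n3 th3 in let c5 := cc n5 th5 in
  let A1 := a1 c1 c3 in let A2 := a2 c1 c3 in let A5 := a5 c3 c5 in
  forall eps : R, 0 <= eps ->
  let f : R[i]^o -> R[i]^o := chardet a0 A1 A2 A5 r2 r4 tau eps in
  (* (a) 0 is a root, and a simple one *)
  (f 0 = 0 /\ derivable f 0 1 /\ 'D_1 f 0 != 0) /\
  (* (b) every other root lies in the open left half-plane *)
  (forall lam : R[i], f lam = 0 -> lam != 0 -> complex.Re lam < 0).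
Proof.
move=> n10 n30 n50 /andP[t10 t1] /andP[t30 t3] /andP[t50 t5] _ _ a00 r20 r40 tau0.
move=> c1 c3 c5 A1 A2 A5 eps eps0 f.
have pi0 : 0 < pi :> R := pi_gt0 R.
have cpos : forall n th : R, 0 < n -> 0 <= th -> th < pi / 2 -> 0 < cc n th.
  move=> n th n0 th0 thl; rewrite /cc divr_gt0 // cos_gt0_pihalf // thl andbT.
  by apply: (lt_le_trans _ th0); rewrite oppr_lt0 divr_gt0.
have c1p : 0 < c1 by exact: cpos.
have c3p : 0 < c3 by exact: cpos.
have c5p : 0 < c5 by exact: cpos.
have c13 : c1 + c3 != 0 by rewrite gt_eqF // addr_gt0.
have c53 : c5 + c3 != 0 by rewrite gt_eqF // addr_gt0.
have [p p0 [hA1 hA2]] : exists2 p : R, 0 < p &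
   (A1 = 2 * p * c3 * (2 * c1 / (c1 + c3)) /\ A2 = 2 * p * c3 * ((c1 - c3) / (c1 + c3))) by exists pi.
have hK : A1 - A2 = 2 * p * c3.
  by rewrite hA1 hA2; field.
have Kp : 0 < A1 - A2 by rewrite hK; apply: mulr_gt0 => //; apply: mulr_gt0.
have K0 : A1 - A2 != 0 by rewrite gt_eqF.
set w := A2 / (A1 - A2).
set m := A5 - 1.
have w1 : 0 < 1 + w.
  have -> : 1 + w = 2 * c1 / (c1 + c3).
    by rewrite /w hK hA2; field; rewrite c13 (gt_eqF c3p) (gt_eqF p0).
  by apply: divr_gt0; [apply: mulr_gt0 | apply: addr_gt0].
have w2 : 0 < 1 - w.
  have -> : 1 - w = 2 * c3 / (c1 + c3) by rewrite /w hK hA2; field; rewrite c13 (gt_eqF c3p) (gt_eqF p0).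
  by apply: divr_gt0; [apply: mulr_gt0 | apply: addr_gt0].
have A5p : 0 < A5 by rewrite /A5 /a5; apply: divr_gt0; [apply: mulr_gt0 | apply: addr_gt0].
have m1 : 0 < 1 + m by rewrite /m addrC subrK.
have m2 : 0 < 1 - m.
  have -> : 1 - m = 2 * c3 / (c5 + c3) by rewrite /m /A5 /a5; field.
  by apply: divr_gt0; [apply: mulr_gt0 | apply: addr_gt0].
set al := A1 * r2.
set be := (A1 - A2) * r4 * A5.
have A1p : 0 < A1.
  rewrite /A1 /a1; apply: mulr_gt0; first by apply: mulr_gt0 => //; apply: mulr_gt0.
  by apply: divr_gt0; [apply: mulr_gt0 | apply: addr_gt0].
have alp : 0 < al by rewrite /al; apply: mulr_gt0.
have bep : 0 < be by rewrite /be; apply: mulr_gt0 => //; apply: mulr_gt0.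
have fE : forall s, f s = (s + al%:C) * (s + be%:C) * (eps%:C * s + 1)
   - (al%:C - w%:C * s) * (be%:C - m%:C * s) * cexp (- ((2 * tau)%:C * s)).
  move=> s; rewrite /f /chardet /Delta.
  apply: det_gen; first by rewrite gt_eqF.
    exact: K0.
  rewrite expr2 -cexpD; congr cexp.
  by rewrite rmorphM rmorph_nat; ring.
have F0 : f 0 = 0 by rewrite fE !mulr0 oppr0 cexp0; ring.
split.
  split; first exact: F0.
  pose G := fun s : R[i]^o => (cexp (- ((2 * tau)%:C * s)) : R[i]^o).
  have hG : is_derive (0:R[i]^o) (1:R[i]^o) G (- (2 * tau)%:C).
    by apply: is_derive_cexp; apply: mulr_gt0.
  pose Fx : R[i]^o -> R[i]^o := (id + cst al%:C) * (id + cst be%:C) * (cst eps%:C * id + cst 1)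
     - (cst al%:C - cst w%:C * id) * (cst be%:C - cst m%:C * id) * G.
  have fF : f = Fx by apply/funext => s; rewrite fE.
  have D : is_derive (0:R[i]^o) (1:R[i]^o) Fx ((al * (1 + m) + be * (1 + w) + al * be * (eps + 2 * tau))%:C).
    have Did : is_derive (0:R[i]^o) (1:R[i]^o) (@id (R[i]^o)) (1:R[i]^o) by exact: is_derive_id.
    have Dc : forall a : R[i]^o, is_derive (0:R[i]^o) (1:R[i]^o) (cst a) (0 : R[i]^o) by move=> a; exact: is_derive_cst.
    have d1 := is_deriveD Did (Dc al%:C).
    have d2 := is_deriveD Did (Dc be%:C).
    have d3 := is_deriveD (is_deriveM (Dc eps%:C) Did) (Dc 1).
    have dP := is_deriveM (is_deriveM d1 d2) d3.
    have q1 := is_deriveB (Dc al%:C) (is_deriveM (Dc w%:C) Did).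
    have q2 := is_deriveB (Dc be%:C) (is_deriveM (Dc m%:C) Did).
    have dQ := is_deriveM (is_deriveM q1 q2) hG.
    have dF := is_deriveB dP dQ.
    apply: (is_derive_eq dF).
    have sE : forall u v : R[i]^o, u *: v = u * v by [].
    rewrite !sE /G /= !mulr0 oppr0 cexp0.
    change ((0 + al%:C) * (0 + be%:C) * (eps%:C * 1 + 0 + 0) + (eps%:C * 0 + 1) * ((0 + al%:C) * (1+0) + (0 + be%:C) * (1 + 0)) - ((al%:C - w%:C * 0) * (be%:C - m%:C * 0) * - (2*tau)%:C + 1 * ((al%:C - w%:C*0) * (0 - (m%:C * 1 + 0)) + (be%:C - m%:C * 0) * (0 - (w%:C * 1 + 0)))) = (al * (1 + m) + be * (1 + w) + al * be * (eps + 2 * tau))%:C).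
    rewrite !(rmorphD, rmorphM, rmorph1, rmorph_nat); ring.
  rewrite fF; split; first exact: (ex_derive (is_derive:=D)).
  rewrite derive_val eq_complex /= negb_and eqxx orbF.
  have h1 := mulr_gt0 alp m1; have h2 := mulr_gt0 bep w1.
  have h3 : 0 <= eps + 2 * tau by rewrite addr_ge0 // mulr_ge0 // ltW.
  have h4 := mulr_ge0 (ltW (mulr_gt0 alp bep)) h3.
  rewrite gt_eqF //; lra.
move=> lam hf hl.
rewrite ltNge; apply/negP => hx.
rewrite fE in hf.
move/eqP: hf; rewrite subr_eq0 => /eqP hf.
have := congr1 (@nr R) hf; rewrite 4!nrM => hn.
clear hf; move: hx hl hn; case: lam => x y /= hx hl hn.
have rp : 0 < x ^+ 2 + y ^+ 2.
  move: hl; rewrite eq_complex /= negb_and => /orP[] h.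
    have : 0 < x ^+ 2 by rewrite lt_def sqrf_eq0 h sqr_ge0.
    have := sqr_ge0 y; lra.
  have : 0 < y ^+ 2 by rewrite lt_def sqrf_eq0 h sqr_ge0.
  have := sqr_ge0 x; lra.
have i1 : nr (al%:C - w%:C * (x +i* y)) < nr (x +i* y + al%:C).
  apply: nr_lt => /=.
  have u1 := mulr_ge0 (mulr_ge0 (ltW alp) hx) (ltW w1).
  have u2 := mulr_gt0 (mulr_gt0 w2 w1) rp.
  nra.
have i2 : nr (be%:C - m%:C * (x +i* y)) < nr (x +i* y + be%:C).
  apply: nr_lt => /=.
  have u1 := mulr_ge0 (mulr_ge0 (ltW bep) hx) (ltW m1).
  have u2 := mulr_gt0 (mulr_gt0 m2 m1) rp.
  nra.
have i3 : 1 <= nr (eps%:C * (x +i* y) + 1).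
  have := nr_sq (eps%:C * (x +i* y) + 1); rewrite /= => e.
  have := nr_ge0 (eps%:C * (x +i* y) + 1).
  have ex := mulr_ge0 eps0 hx.
  have := sqr_ge0 (eps * y).
  nra.
set G := cexp (- ((2 * tau)%:C * (x +i* y))).
have i4 : nr G <= 1.
  set E := expR (- (2 * tau * x)); set C := cos (- (2 * tau * y)); set S := sin (- (2 * tau * y)).
  have eR : complex.Re G = E * C by rewrite /G /cexp /= !mul0r !subr0 !addr0.
  have eI : complex.Im G = E * S by rewrite /G /cexp /= !mul0r !subr0 !addr0.
  have e := nr_sq G; rewrite eR eI in e.
  have e2 : nr G ^+ 2 = E ^+ 2 * (C ^+ 2 + S ^+ 2) by rewrite e; ring.
  rewrite cos2Dsin2 mulr1 in e2.
  have hE0 : 0 <= E := expR_ge0 _.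
  have hE1 : E <= 1.
    rewrite /E expR_le1; have := mulr_ge0 (ltW tau0) hx; lra.
  have := nr_ge0 G; nra.
move: hn; rewrite -/G.
set p1 := nr (x +i* y + al%:C); set p2 := nr (x +i* y + be%:C).
set p3 := nr (eps%:C * (x +i* y) + 1).
set q1 := nr (al%:C - w%:C * (x +i* y)); set q2 := nr (be%:C - m%:C * (x +i* y)).
move=> hn.
have q10 : 0 <= q1 := nr_ge0 _.
have q20 : 0 <= q2 := nr_ge0 _.
have g0 : 0 <= nr G := nr_ge0 _.
have q12 := mulr_ge0 q10 q20.
have k1 : q1 * q2 * nr G <= q1 * q2 by nra.
have p10 : 0 <= p1 := nr_ge0 _.
have p20 : 0 <= p2 := nr_ge0 _.
have k2 : q1 * q2 < p1 * p2.
  have z1 : q1 * q2 <= p1 * q2 by apply: ler_wpM2r => //; exact: ltW.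
  have z2 : p1 * q2 < p1 * p2 by rewrite ltr_pM2l // (le_lt_trans q10 i1).
  lra.
have p12 : 0 <= p1 * p2 := mulr_ge0 p10 p20.
have k3 : p1 * p2 <= p1 * p2 * p3 by rewrite ler_peMr.
move: hn.
lra.
Qed.
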